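(* Let $D=(V,E;s,t)$, $N$ be as in the context with $\sigma_N\ge2$. In the sequential linear programs for the nucleon of $\widetilde\Gamma_D$, one has $\epsilon_1=0$ and $\widetilde X_1=\mathcal{C}(\widetilde\Gamma_D)$.
   Context: $D=(V,E;s,t)$ is a directed network with unit arc capacities (parallel arcs allowed); $N\subseteq E$ is the set of private arcs (players), $M=E\setminus N$ public arcs; every $s$-$t$ path contains an arc of $N$ and every arc lies on some $s$-$t$ path. $\sigma_N$ is the maximum number of $s$-$t$ paths pairwise sharing no arc of $N$. For $S\subseteq N$, $\gamma(S)$ is the maximum number of pairwise arc-disjoint $s$-$t$ paths in $D_S=(V,S\cup M;s,t)$. Auxiliary game $\widetilde\Gamma_D=(N,\tilde\gamma)$: $\tilde\gamma(N)=\sigma_N$, $\tilde\gamma(S)=\gamma(S)$ for $S\subsetneq N$; $\chi(\widetilde\Gamma_D)=\{x\in\mathbb{R}^N_{\ge0}:x(N)=\sigma_N\}$, $x(S)=\sum_{i\in S}x_i$; core $\mathcal{C}(\widetilde\Gamma_D)=\{x\in\chi(\widetilde\Gamma_D):x(S)\ge\tilde\gamma(S)\ \forall S\}$. For $X\subseteq\mathbb{R}^N$, $\mathrm{fix}(X)=\{S\subseteq N: x(S) \text{ is the same for all } x\in X\}$. Sequential LPs: $\widetilde X_0=\chi(\widetilde\Gamma_D)$, $\mathrm{fix}(\widetilde X_0)=\{\emptyset,N\}$, $\epsilon_0=0$; for $k\ge0$, $\widetilde{LP}_{k+1}$ maximizes $\epsilon$ subject to $x(S)\ge(1+\epsilon)\tilde\gamma(S)$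 for all $S\in 2^N\setminus\mathrm{fix}(\widetilde X_k)$ and $x\in\widetilde X_k$; $\epsilon_{k+1}$ is its optimal value and $\widetilde X_{k+1}$ is the set of $x$ such that $(x,\epsilon_{k+1})$ is optimal. *)

(* Defs.v *)
From HB Require Import structures.
From mathcomp Require Import all_boot all_order all_algebra.
From mathcomp Require Import boolp reals.
Set Implicit Arguments.
Unset Strict Implicit.
Unset Printing Implicit Defensive.
Import Order.TTheory GRing.Theory Num.Theory.

(* Arcs form the finite type  E := N + M : private arcs (players) are the
   elements [inl e] (e : N), public arcs the elements [inr m] (m : M);
   parallel arcs are allowed since arcs are abstract, with tail [src] and
   head [dst]. *)
Section Network.
Variables (V N M : finType) (src dst : N + M -> V) (s t : V).

Local Notation arc := (N + M)%type.

Fixpoint walk_to (x : V) (p : seq arc) : bool :=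
  if p is a :: p' then (src a == x) && walk_to (dst a) p' else x == t.

Definition stpath (p : seq arc) : bool :=
  walk_to s p && uniq (s :: map dst p).

(* arcs available in D_S = (V, S \cup M; s, t) *)
Definition usable (S : {set N}) (a : arc) : bool :=
  match a with inl e => e \in S | inr _ => true end.

Definition N_disjoint_family (k : nat) : Prop :=
  exists P : 'I_k -> seq arc,
    (forall i, stpath (P i)) /\
    (forall i j, i != j -> forall e : N, inl e \in P i -> inl e \notin P j).

Definition arc_disjoint_family (S : {set N}) (k : nat) : Prop :=
  exists P : 'I_k -> seq arc,
    (forall i, stpath (P i) /\ all (usable S) (P i)) /\
    (forall i j, i != j -> forall a : arc, a \in P i -> a \notin P j).

(* maxima; the bound #|arc| is harmless under the standing assumptions
   (paths are nonempty and every path has an arc of N) *)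
Definition sigmaN : nat :=
  \max_(k < #|{: arc}|.+1 | `[< N_disjoint_family k >]) k.

Definition gamma (S : {set N}) : nat :=
  \max_(k < #|{: arc}|.+1 | `[< arc_disjoint_family S k >]) k.

Definition gammat (S : {set N}) : nat :=
  if S == [set: N] then sigmaN else gamma S.

Variable R : realType.
Local Open Scope ring_scope.

Definition xsum (x : N -> R) (S : {set N}) : R := \sum_(i in S) x i.

Definition chi (x : N -> R) : Prop :=
  (forall i, 0 <= x i) /\ xsum x [set: N] = sigmaN%:R.

Definition core (x : N -> R) : Prop :=
  chi x /\ forall S : {set N}, (gammat S)%:R <= xsum x S.

Definition fixed (X : (N -> R) -> Prop) (S : {set N}) : Prop :=
  forall x y, X x -> X y -> xsum x S = xsum y S.

(* feasibility of (x, eps) for the LP following X (i.e. LP_{k+1} for X = X_k) *)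
Definition LPfeas (X : (N -> R) -> Prop) (x : N -> R) (eps : R) : Prop :=
  X x /\ forall S : {set N}, ~ fixed X S -> (1 + eps) * (gammat S)%:R <= xsum x S.

Definition LPopt (X : (N -> R) -> Prop) (eps : R) : Prop :=
  (exists x, LPfeas X x eps) /\ forall x e, LPfeas X x e -> e <= eps.

Definition LPnext (X : (N -> R) -> Prop) (eps : R) : (N -> R) -> Prop :=
  fun x => LPfeas X x eps.

End Network.

(* Main.v *)
Require Import Defs.
From HB Require Import structures.
From mathcomp Require Import all_boot all_order all_algebra zify.
From mathcomp Require Import lra.
From mathcomp Require Import boolp reals.
Import Order.TTheory GRing.Theory Num.Theory.
Set Implicit Arguments.
Unset Strict Implicit.
Unset Printing Implicit Defensive.

Section Flow.
Variables (V N M : finType) (src dst : N + M -> V) (s t : V).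
Local Notation arc := (N + M)%type.
Local Open Scope ring_scope.

Definition b2i (b : bool) : int := (b : nat)%:Z.

Lemma b2i0 : b2i false = 0. Proof. by []. Qed.
Lemma b2i1 : b2i true = 1. Proof. by []. Qed.

Definition exc (f : arc -> int) (v : V) : int :=
  \sum_a (b2i (src a == v) - b2i (dst a == v)) * f a.

Lemma exc_ext f g v : (forall a, f a = g a) -> exc f v = exc g v.
Proof. by move=> H; apply: eq_bigr => a _; rewrite H. Qed.

Lemma exc_add f g v : exc (fun a => f a + g a) v = exc f v + exc g v.
Proof. by rewrite /exc -big_split /=; apply: eq_bigr => a _; rewrite mulrDr. Qed.

Lemma exc_sub f g v : exc (fun a => f a - g a) v = exc f v - exc g v.
Proof. by rewrite /exc -sumrB /=; apply: eq_bigr => a _; rewrite mulrBr. Qed.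

Lemma sum_b2i (A : {set V}) (u : V) : \sum_(v in A) b2i (u == v) = b2i (u \in A).
Proof.
case: (boolP (u \in A)) => H.
  rewrite (bigD1 u) //= eqxx big1 ?addr0 // => v /andP[_ /negbTE]; by rewrite eq_sym => ->.
by rewrite big1 // => v vA; case: eqP => // e; rewrite e vA in H.
Qed.

Lemma exc_set (A : {set V}) f :
  \sum_(v in A) exc f v = \sum_a (b2i (src a \in A) - b2i (dst a \in A)) * f a.
Proof.
rewrite /exc exchange_big /=; apply: eq_bigr => a _.
by rewrite -mulr_suml sumrB !sum_b2i.
Qed.

Definition isflow (f : arc -> int) :=
  [/\ forall a, 0 <= f a, forall e, f (inl e) <= 1 &
      forall v, v != s -> v != t -> exc f v = 0].

Lemma exc_cut (A : {set V}) f : isflow f -> s \in A -> t \notin A ->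
  exc f s = \sum_a (b2i (src a \in A) - b2i (dst a \in A)) * f a.
Proof.
case=> _ _ Hc sA tA; rewrite -exc_set (bigD1 s) //= big1 ?addr0 //.
move=> v /andP[vA vs]; apply: Hc => //; apply: contraNneq tA => <- //.
Qed.

Definition dart := (arc * bool)%type.
Definition tl (d : dart) := if d.2 then src d.1 else dst d.1.
Definition hd (d : dart) := if d.2 then dst d.1 else src d.1.
Definition sgn (b : bool) : int := if b then 1 else -1.
Definition dsum (ds : seq dart) (a : arc) : int :=
  \sum_(d <- ds) b2i (d.1 == a) * sgn d.2.

Fixpoint dchain (x : V) (ds : seq dart) : bool :=
  if ds is d :: ds' then (tl d == x) && dchain (hd d) ds' else true.

Lemma exc_single d v : exc (fun a => b2i (d.1 == a) * sgn d.2) v =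
  b2i (tl d == v) - b2i (hd d == v).
Proof.
rewrite /exc (bigD1 d.1) //= big1 ?addr0; last first.
  by move=> a /negbTE; rewrite eq_sym => ->; rewrite b2i0 mul0r mulr0.
rewrite eqxx b2i1 mul1r /tl /hd; case: d.2 => /=; first by rewrite mulr1.
by rewrite mulrN1 opprB.
Qed.

Lemma exc_dsum ds x v : dchain x ds ->
  exc (dsum ds) v = b2i (x == v) - b2i (last x (map hd ds) == v).
Proof.
elim: ds x => [|d ds IH] x /=.
  by move=> _; rewrite /exc big1 ?subrr // => a _; rewrite /dsum big_nil mulr0.
case/andP=> /eqP tx Hc.
rewrite (exc_ext _ (g := fun a => b2i (d.1 == a) * sgn d.2 + dsum ds a)); last first.
  by move=> a; rewrite /dsum big_cons.
rewrite exc_add exc_single (IH (hd d) Hc) tx.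
by rewrite addrA subrK.
Qed.

Lemma dsum_notin ds a : a \notin map fst ds -> dsum ds a = 0.
Proof.
move=> H; rewrite /dsum big1_seq // => d /andP[_ dds].
case: eqP => [e|]; last by rewrite b2i0 mul0r.
by rewrite -e (map_f fst dds) in H.
Qed.

Lemma dsum_in ds d : uniq (map fst ds) -> d \in ds -> dsum ds d.1 = sgn d.2.
Proof.
elim: ds => [|d' ds IH] //= /andP[nin U]; rewrite inE => /orP[/eqP ->|dds].
  by rewrite /dsum big_cons -/(dsum ds _) dsum_notin // eqxx b2i1 mul1r addr0.
rewrite /dsum big_cons -/(dsum ds _) IH //.
case: eqP => [e|]; last by rewrite b2i0 mul0r add0r.
by rewrite e (map_f fst dds) in nin.
Qed.


Definition suppR (f : arc -> int) : rel V :=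
  fun u v => [exists a, (0 < f a) && (src a == u) && (dst a == v)].

Lemma path_arcs f x p : path (suppR f) x p ->
  exists q : seq arc, [/\ map dst q = p, all (fun a => 0 < f a) q &
                          walk_to src dst (last x p) x q].
Proof.
elim: p x => [|v p IH] x /=.
  by move=> _; exists [::]; rewrite /= eqxx.
case/andP=> /existsP[a /andP[/andP[fa /eqP sa] /eqP da]] Hp.
have [q [mq aq wq]] := IH v Hp.
by exists (a :: q); rewrite /= mq da fa aq sa eqxx wq.
Qed.

Lemma support_reach f : isflow f -> 0 < exc f s -> connect (suppR f) s t.
Proof.
move=> Hf Hpos; apply/negPn/negP => Hnt.
set A := [set v | connect (suppR f) s v].
have sA : s \in A by rewrite inE connect0.
have tA : t \notin A by rewrite inE.
have := exc_cut Hf sA tA; move=> E.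
suff : exc f s <= 0 by rewrite leNgt Hpos.
rewrite E; apply: sumr_le0 => a _.
case: Hf => f0 _ _; have := f0 a.
case: (boolP (src a \in A)) => Hs; case: (boolP (dst a \in A)) => Hd;
  rewrite ?b2i0 ?b2i1; try lia.
have : ~~ (0 < f a).
  apply/negP => fa; move: Hd; rewrite inE; apply/negP/negPn.
  move: Hs; rewrite inE => Hs; apply: (connect_trans Hs); apply: connect1.
  by apply/existsP; exists a; rewrite fa !eqxx.
lia.
Qed.

Lemma flow_path f : isflow f -> 0 < exc f s ->
  exists p, stpath src dst s t p && all (fun a => 0 < f a) p.
Proof.
move=> Hf Hpos; have /connectP[p Hp et] := support_reach Hf Hpos.
suff : exists q, [&& walk_to src dst (last s p) s q, uniq (s :: map dst q)
                   & all (fun a => 0 < f a) q].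
  by rewrite -et => -[q /and3P[w u al]]; exists q; rewrite /stpath w u al.
case: (shortenP Hp) => p' Hp' Up' _.
have [q [mq aq wq]] := path_arcs Hp'.
by exists q; rewrite wq mq Up' aq.
Qed.

Definition fwd (a : arc) : dart := (a, true).

Lemma walk_dchain x p : walk_to src dst t x p ->
  dchain x (map fwd p) && (last x (map hd (map fwd p)) == t).
Proof.
elim: p x => [|a p IH] x /=; first by [].
by case/andP=> sx /IH /andP[-> ->]; rewrite /tl /= sx.
Qed.

Lemma map_fst_fwd p : map fst (map fwd p) = p.
Proof. by elim: p => //= a p ->. Qed.

Lemma decomp (hst : s != t) k : forall f, isflow f -> exc f s = k%:Z ->
  exists P : 'I_k -> seq arc,
    [/\ forall i, stpath src dst s t (P i),
        forall i j, i != j -> forall e, inl e \in P i -> inl e \notin P j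
      & forall i a, a \in P i -> 0 < f a].
Proof.
elim: k => [|k IH] f Hf Hv.
  exists (fun _ => [::]); split; by case=> m Hm; exfalso; move: Hm; rewrite ltn0.
have [p /andP[sp ap]] : exists p, stpath src dst s t p && all (fun a => 0 < f a) p.
  by apply: flow_path => //; rewrite Hv.
have /andP[wp up] := sp.
have /andP[dch /eqP lst] := walk_dchain wp.
have Up : uniq p by move: up => /= /andP[_ /map_uniq].
set ds := map fwd p.
have Uds : uniq (map fst ds) by rewrite map_fst_fwd.
have Dp : forall a, dsum ds a = b2i (a \in p).
  move=> a; case: (boolP (a \in p)) => ap'.
    by rewrite (dsum_in (d := fwd a)) // /ds map_f.
  by rewrite dsum_notin // map_fst_fwd.
set g := fun a => f a - dsum ds a.
case: Hf => f0 f1 fc.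
have Hg : isflow g.
  split.
  - move=> a; rewrite /g Dp; have := f0 a.
    case: (boolP (a \in p)) => ain; rewrite ?b2i0 ?b2i1; last by lia.
    by have /= := allP ap a ain; lia.
  - move=> e; rewrite /g Dp; have := f1 e; case: (inl e \in p); rewrite ?b2i0 ?b2i1; lia.
  - move=> v vs vt; rewrite /g exc_sub (exc_dsum _ dch) lst fc //.
    by rewrite eq_sym (negbTE vs) eq_sym (negbTE vt) b2i0; lia.
have Hgv : exc g s = k%:Z.
  rewrite /g exc_sub (exc_dsum _ dch) lst Hv eqxx eq_sym (negbTE hst) b2i0 b2i1 subr0.
  by rewrite -addn1 PoszD addrK.
have [P [sP dP pP]] := IH g Hg Hgv.
have gle : forall a, g a <= f a.
  by move=> a; rewrite /g Dp; case: (a \in p); rewrite ?b2i0 ?b2i1; lia.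
have pe : forall e, inl e \in p -> g (inl e) = 0.
  move=> e ein; rewrite /g Dp ein b2i1; have := f1 e; have /= := allP ap _ ein; lia.
have notP : forall j e, inl e \in p -> inl e \notin P j.
  move=> j e ein; apply/negP => /pP; rewrite pe //.
exists (fun i => if unlift ord_max i is Some j then P j else p); split.
- by move=> i; case: unliftP.
- move=> i j; case: unliftP => [i' ->|->]; case: unliftP => [j' ->|->] //.
  + move=> neq; apply: dP; apply: contraNneq neq => ->; done.
  + move=> _ e ein; apply/negP => ep; by move: (notP i' e ep); rewrite ein.
  + by move=> _ e ein; apply: notP.
  + by rewrite eqxx.
- move=> i a; case: unliftP => [i' _|_] ain; last by apply: (allP ap).
  by have := pP i' a ain; have := gle a; lia.
Qed.


Definition fwdok (f : arc -> int) (a : arc) : bool :=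
  match a with inl _ => f a < 1 | inr _ => true end.
Definition resid f (d : dart) : bool := if d.2 then fwdok f d.1 else 0 < f d.1.
Definition resR f : rel V :=
  fun u v => [exists d, resid f d && (tl d == u) && (hd d == v)].

Lemma path_darts f x p : path (resR f) x p ->
  exists ds, [/\ dchain x ds, map hd ds = p & all (resid f) ds].
Proof.
elim: p x => [|v p IH] x /=; first by move=> _; exists [::].
case/andP=> /existsP[d /andP[/andP[rd tx] /eqP hv]] Hp.
have [ds [c m a]] := IH v Hp.
by exists (d :: ds); rewrite /= tx hv c m rd a.
Qed.

Lemma uniq_darts x ds : dchain x ds -> uniq (x :: map hd ds) -> uniq (map fst ds).
Proof.
elim: ds x => [|d ds IH] x //=.
case/andP=> /eqP tx Hc; rewrite inE negb_or => /andP[/andP[xh xn] /andP[hn U]].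
rewrite (IH (hd d)) ?andbT //=; last by rewrite hn.
apply/mapP => -[d' d'in e].
have H1 : hd d' \in map hd ds by apply: map_f.
have H2 : (hd d' == src d.1) || (hd d' == dst d.1).
  by rewrite e /hd; case: d'.2; rewrite eqxx ?orbT.
have : (hd d' == x) || (hd d' == hd d).
  by move: H2; rewrite -tx /tl /hd; case: d.2 => //; rewrite orbC.
by case/orP => /eqP E; [move: xn; rewrite -E H1 | move: hn; rewrite -E H1].
Qed.

Lemma augment (hst : s != t) f : isflow f -> connect (resR f) s t ->
  exists g, isflow g /\ exc g s = exc f s + 1.
Proof.
move=> Hf /connectP[p Hp et].
move: et; case: (shortenP Hp) => p' Hp' Up' _ et.
have [ds [dc mh ar]] := path_darts Hp'.
have Ud : uniq (map fst ds) by apply: (uniq_darts dc); rewrite mh.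
have lst : last s (map hd ds) = t by rewrite mh.
case: Hf => f0 f1 fc.
exists (fun a => f a + dsum ds a); split; last first.
  rewrite exc_add (exc_dsum _ dc) lst eqxx eq_sym (negbTE hst) b2i0 b2i1 subr0 //.
have key : forall a, (dsum ds a = 0) \/
    (exists2 d, d \in ds & a = d.1 /\ dsum ds a = sgn d.2).
  move=> a; case: (boolP (a \in map fst ds)) => H; last by left; apply: dsum_notin.
  by right; case/mapP: H => d dds ->; exists d => //; split => //; apply: dsum_in.
split.
- move=> a; have := f0 a; case: (key a) => [->|[d dds [ad ->]]]; first lia.
  have := allP ar d dds; rewrite /resid /sgn; case: d.2 => //; first lia.
  by rewrite -ad; lia.
- move=> e; have := f1 e; case: (key (inl e)) => [->|[d dds [ad ->]]]; first lia.
  have := allP ar d dds; rewrite /resid /sgn; case: d.2 => //; last lia.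
  by rewrite -ad /=; lia.
- move=> v vs vt; rewrite exc_add (exc_dsum _ dc) lst fc //.
  by rewrite eq_sym (negbTE vs) eq_sym (negbTE vt) b2i0; lia.
Qed.

Lemma exc0 v : exc (fun _ => 0) v = 0.
Proof. by rewrite /exc big1 // => a _; rewrite mulr0. Qed.

Lemma maxflow (hst : s != t) n :
  (forall f k, isflow f -> exc f s = k%:Z -> (k <= n)%N) ->
  exists f, isflow f /\ ~~ connect (resR f) s t /\ (0 <= exc f s).
Proof.
move=> Hb.
pose P k := `[< exists f, isflow f /\ exc f s = k%:Z >].
have ex0 : exists k, P k.
  exists 0%N; apply/asboolP; exists (fun _ => 0); rewrite exc0; split => //.
  by split => // v _ _; rewrite exc0.
have ub : forall k, P k -> (k <= n)%N by move=> k /asboolP[f [Hf Hv]]; apply: Hb Hv.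
case: (ex_maxnP ex0 ub) => k /asboolP[f [Hf Hv]] Hmax.
exists f; split => //; split; last by rewrite Hv.
apply/negP => Hc; have [g [Hg Hgv]] := augment hst Hf Hc.
have : P k.+1 by apply/asboolP; exists g; split => //; rewrite Hgv Hv -addn1 PoszD.
by move/Hmax; rewrite ltnn.
Qed.

Lemma cross (A : {set V}) y x p : walk_to src dst y x p -> x \in A -> y \notin A ->
  exists2 a, a \in p & (src a \in A) && (dst a \notin A).
Proof.
elim: p x => [|a p IH] x /=; first by move=> /eqP -> ->.
case/andP=> /eqP sx w xA yA.
case: (boolP (dst a \in A)) => dA.
  by have [b bp Hb] := IH _ w dA yA; exists b => //; rewrite inE bp orbT.
by exists a; rewrite ?inE ?eqxx // sx xA.
Qed.

Lemma sum_b2i_card (C : {set N}) : \sum_(e : N) b2i (e \in C) = (#|C|)%:Z.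
Proof.
rewrite -sum1_card (big_mkcond (fun e => e \in C)) /=.
rewrite (big_morph Posz PoszD (erefl 0%:Z)); apply: eq_bigr => e _.
by case: (e \in C).
Qed.


Lemma cut_bound (C S : {set N}) k (P : 'I_k -> seq arc) :
  (forall p, stpath src dst s t p -> exists2 e, e \in C & inl e \in p) ->
  (forall i, stpath src dst s t (P i)) ->
  (forall i j, i != j -> forall e, inl e \in P i -> inl e \notin P j) ->
  (forall i e, inl e \in P i -> e \in S) -> (k <= #|C :&: S|)%N.
Proof.
move=> Hcut sP dP SP.
have : forall i, exists e, (e \in C) && (inl e \in P i).
  by move=> i; have [e eC ep] := Hcut _ (sP i); exists e; rewrite eC ep.
case/fin_all_exists => h Hh.
have hinj : injective h.
  move=> i j eq; apply/eqP; apply/negPn/negP => neq.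
  have /andP[_ hi] := Hh i; have /andP[_ hj] := Hh j.
  by move: (dP i j neq (h i) hi); rewrite eq hj.
rewrite -{1}[k]card_ord -(card_imset (mem 'I_k) hinj).
apply: subset_leq_card; apply/subsetP => _ /imsetP[i _ ->].
have /andP[hC hp] := Hh i; by rewrite inE hC (SP i _ hp).
Qed.

Lemma mincut (hst : s != t)
  (Hpriv : forall p, stpath src dst s t p -> exists e : N, inl e \in p) :
  exists C : {set N},
    (forall p, stpath src dst s t p -> exists2 e, e \in C & inl e \in p) /\
    exists P : 'I_#|C| -> seq arc, (forall i, stpath src dst s t (P i)) /\
      (forall i j, i != j -> forall e, inl e \in P i -> inl e \notin P j).
Proof.
have Hb : forall f k, isflow f -> exc f s = k%:Z -> (k <= #|N|)%N.
  move=> f k Hf Hv; have [P [sP dP _]] := decomp hst Hf Hv.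
  have := @cut_bound setT setT k P; rewrite setIid cardsT; apply => //.
  by move=> p /Hpriv[e ep]; exists e; rewrite ?inE.
  by move=> i e _; rewrite inE.
have [f [Hf [Hnc Hpos]]] := maxflow hst Hb.
set A := [set v | connect (resR f) s v].
have sA : s \in A by rewrite inE connect0.
have tA : t \notin A by rewrite inE.
have Hf' := Hf; case: Hf' => f0 f1 fc.
have reach : forall d, resid f d -> tl d \in A -> hd d \in A.
  move=> d rd; rewrite !inE => H; apply: (connect_trans H); apply: connect1.
  by apply/existsP; exists d; rewrite rd !eqxx.
have leave : forall a, src a \in A -> dst a \notin A ->
    exists e, a = inl e /\ f a = 1.
  move=> a sa da.
  have nr : ~~ resid f (a, true).
    by apply/negP => r; move: (reach _ r sa); rewrite /hd /= (negbTE da).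
  move: nr; rewrite /resid /=; case: a sa da => [e|m] //= sa da nr.
  by exists e; split => //; have := f1 e; have := f0 (inl e); lia.
have enter : forall a, src a \notin A -> dst a \in A -> f a = 0.
  move=> a sa da.
  have nr : ~~ resid f (a, false).
    by apply/negP => r; move: (reach _ r da); rewrite /hd /= (negbTE sa).
  by move: nr; rewrite /resid /=; have := f0 a; lia.
set C := [set e | (src (inl e) \in A) && (dst (inl e) \notin A)].
exists C; split.
  move=> p /andP[wp _]; have [a ap /andP[sa da]] := cross wp sA tA.
  have [e [ae _]] := leave a sa da; exists e => //.
    by rewrite inE -ae sa da.
  by rewrite -ae.
have Hv : exc f s = (#|C|)%:Z.
  rewrite (exc_cut Hf sA tA) -sum_b2i_card.
  rewrite (big_sumType _ predT) /= [X in _ + X]big1 ?addr0; last first.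
    move=> m _; case: (boolP (src (inr m) \in A)) => sa;
      case: (boolP (dst (inr m) \in A)) => da; rewrite ?b2i0 ?b2i1.
    - by rewrite subrr mul0r.
    - by have [e [] ] := leave _ sa da.
    - by rewrite enter // mulr0.
    - by rewrite subrr mul0r.
  apply: eq_bigr => e _; rewrite [e \in C]inE.
  case: (boolP (src (inl e) \in A)) => sa;
    case: (boolP (dst (inl e) \in A)) => da; rewrite ?b2i0 ?b2i1 /=.
  - by rewrite subrr mul0r.
  - by have [e' [_ ->]] := leave _ sa da.
  - by rewrite enter // mulr0.
  - by rewrite subrr mul0r.
have [P [sP dP _]] := decomp hst Hf Hv.
by exists P.
Qed.

End Flow.

Section Main.
Variables (V N M : finType) (src dst : N + M -> V) (s t : V) (R : realType).
Local Notation arc := (N + M)%type.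
Local Open Scope ring_scope.

Lemma s_neq_t (Hpriv : forall p, stpath src dst s t p -> exists e : N, inl e \in p) :
  s != t.
Proof.
apply/negP => /eqP st; have [|e] := Hpriv [::]; last by rewrite in_nil.
by rewrite /stpath /= st eqxx.
Qed.

Lemma xsum_ind (C S : {set N}) :
  xsum (fun e => ((e \in C) : nat)%:R : R) S = (#|C :&: S|)%:R.
Proof.
rewrite /xsum -natr_sum; congr (_%:R).
rewrite -sum1_card big_mkcond [RHS]big_mkcond /=.
by apply: eq_bigr => i _; rewrite inE; case: (i \in C); case: (i \in S).
Qed.

Lemma notfixed (S : {set N}) e1 e2 : e1 \in S -> e2 \notin S ->
  (0 < sigmaN src dst s t)%N -> ~ fixed (chi src dst s t (R:=R)) S.
Proof.
move=> e1S e2S spos Hfix.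
pose x (e0 : N) := fun e : N => if e == e0 then (sigmaN src dst s t)%:R else 0 : R.
have xs : forall e0 (T : {set N}), e0 \in T -> xsum (x e0) T = (sigmaN src dst s t)%:R.
  move=> e0 T e0T; rewrite /xsum (bigD1 e0) //= /x eqxx big1 ?addr0 //.
  by move=> e /andP[_ /negbTE ->].
have ch : forall e0, chi src dst s t (x e0).
  move=> e0; split; last by rewrite xs.
  by move=> e; rewrite /x; case: ifP.
have := Hfix _ _ (ch e1) (ch e2); rewrite xs //.
rewrite /xsum big1; last by move=> e eS; rewrite /x; case: eqP => // ee; rewrite -ee eS in e2S.
by move/eqP; rewrite pnatr_eq0; case: (sigmaN src dst s t) spos.
Qed.

Lemma aux_ineq (a b : R) : 0 < a -> 0 < b -> (1 + a) * b <= b -> False.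
Proof. move=> *; nra. Qed.

Lemma aux_ineq2 (a b c : R) : 0 < a -> 1 <= b -> (1 + a) * b <= c -> 1 + a <= c.
Proof. move=> *; nra. Qed.

Lemma eps_bound (Hpriv : forall p, stpath src dst s t p -> exists e : N, inl e \in p)
  k (Hk : sigmaN src dst s t = k) (Hk2 : (2 <= k)%N)
  (P : 'I_k -> seq arc) (sP : forall i, stpath src dst s t (P i))
  (dP : forall i j, i != j -> forall e, inl e \in P i -> inl e \notin P j)
  (x : N -> R) (ep : R) :
  LPfeas src dst s t (chi src dst s t (R:=R)) x ep -> ep <= 0.
Proof.
case=> [[x0 xs] Hx].
pose A i := [set e : N | inl e \in P i].
have hasA : forall i, exists e, e \in A i.
  by move=> i; have [e ein] := Hpriv _ (sP i); exists e; rewrite inE.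
have h0 : (0 < k)%N by apply: leq_trans Hk2.
pose o0 := Ordinal h0; pose o1 := Ordinal Hk2.
have other : forall i : 'I_k, exists2 j, j != i & True.
  move=> i; case: (eqVneq i o0) => [->|ne]; last by exists o0; rewrite // eq_sym.
  by exists o1.
have notin : forall i j e, i != j -> e \in A j -> e \notin A i.
  move=> i j e ij; rewrite !inE => ej; apply: dP ej; by rewrite eq_sym.
rewrite leNgt; apply/negP => epos.
have lb : forall i, 1 + ep <= xsum x (A i).
  move=> i; have [j ji _] := other i.
  have [ei eiA] := hasA i; have [ej ejA] := hasA j.
  have ejn : ej \notin A i by apply: notin ejA; rewrite eq_sym.
  have nf := notfixed eiA ejn.
  have spos : (0 < sigmaN src dst s t)%N by rewrite Hk.
  have H := Hx (A i) (nf spos).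
  have g1 : (1 <= gammat src dst s t (A i))%N.
    rewrite /gammat; case: eqP => [eT|_]; first by move: ejn; rewrite eT inE.
    have Hlt : (1 < #|{: arc}|.+1)%N by rewrite ltnS; apply/card_gt0P; exists (inl ei).
    apply: (leq_trans _ (leq_bigmax_cond (Ordinal Hlt) _)) => //.
    apply/asboolP; exists (fun _ => P i); split.
      move=> _; split; first exact: sP.
      by apply/allP => -[e|m] //= ein; rewrite inE.
    by move=> i0 j0; rewrite (ord1 i0) (ord1 j0) eqxx.
  have g1R : 1 <= (gammat src dst s t (A i))%:R :> R by rewrite ler1n.
  exact: aux_ineq2 epos g1R H.
have S1 : \sum_(i < k) (1 + ep) <= \sum_(i < k) xsum x (A i) by apply: ler_sum => i _.
have S2 : \sum_(i < k) xsum x (A i) <= xsum x [set: N].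
  rewrite /xsum; under eq_bigr do rewrite big_mkcond; rewrite exchange_big /=.
  rewrite [X in _ <= X]big_mkcond /=; apply: ler_sum => e _; rewrite in_setT.
  case: (pickP (fun i => e \in A i)) => [i0 ei0|none].
    rewrite (bigD1 i0) //= ei0 big1 ?addr0 // => j ji.
    by rewrite (negbTE (notin j i0 e ji ei0)).
  by rewrite big1 // => i _; have /= -> := none i.
move: S1 S2; rewrite sumr_const card_ord xs Hk => S1 S2; rewrite -mulr_natr in S1.
have kpos : 0 < k%:R :> R by rewrite ltr0n.
by have := aux_ineq epos kpos (le_trans S1 S2).
Qed.

End Main.

Theorem lemma11 (V N M : finType) (src dst : N + M -> V) (s t : V)
  (R : realType)
  (Hpriv : forall p, stpath src dst s t p -> exists e : N, inl e \in p)
  (Hcover : forall a : N + M, exists p, stpath src dst s t p /\ a \in p)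
  (Hsigma : (2 <= sigmaN src dst s t)%N) :
  LPopt src dst s t (chi src dst s t (R:=R)) 0 /\
  (forall x : N -> R,
      LPnext src dst s t (chi src dst s t (R:=R)) 0 x <-> core src dst s t x).
Proof.
have hst := s_neq_t Hpriv.
have [C [Hcut [P [sP dP]]]] := mincut hst Hpriv.
have sigC : sigmaN src dst s t = #|C|.
  apply/eqP; rewrite eqn_leq; apply/andP; split.
    apply/bigmax_leqP => k /asboolP [Q [sQ dQ]] /=.
    by have := cut_bound Hcut sQ dQ (S := setT); rewrite setIT; apply => i e _; rewrite inE.
  have Hlt : (#|C| < #|{: N + M}|.+1)%N.
    by rewrite ltnS card_sum (leq_trans (max_card _)) ?leq_addr.
  apply: (leq_trans _ (leq_bigmax_cond (Ordinal Hlt) _)) => //.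
  by apply/asboolP; exists P.
have gamC : forall S, (gammat src dst s t S <= #|C :&: S|)%N.
  move=> S; rewrite /gammat; case: eqP => [->|_]; first by rewrite setIT sigC.
  apply/bigmax_leqP => k /asboolP [Q [sQ dQ]] /=.
  apply: (cut_bound Hcut (P := Q)).
  - by move=> i; case: (sQ i).
  - by move=> i j neq e ein; exact: (dQ i j neq _ ein).
  - by move=> i e ein; case: (sQ i) => _ /allP /(_ _ ein).
pose x0 := fun e : N => (((e \in C) : nat)%:R : R)%R.
have core0 : core src dst s t x0.
  split; last by move=> S; rewrite xsum_ind ler_nat gamC.
  by split; [move=> e; rewrite /x0 ler0n | rewrite xsum_ind setIT sigC].
split; last first.
  move=> x; split.
    case=> chx Hx; split => // S.
    case: (pselect (fixed (chi src dst s t (R:=R)) S)) => [Hf|Hnf].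
      by rewrite (Hf x x0 chx core0.1); apply: core0.2.
    by have := Hx S Hnf; rewrite addr0 mul1r.
  by case=> chx Hx; split => // S _; rewrite addr0 mul1r.
split.
  exists x0; split; first exact: core0.1.
  by move=> S _; rewrite addr0 mul1r; apply: core0.2.
move=> x ep Hf; apply: (eps_bound Hpriv sigC _ sP dP Hf).
by rewrite -sigC.
Qed.
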